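(* Let $a,b,c,d,P_{\max}>0$ and set $\alpha=d(1+bP_{\max})$. Consider the frontier curve $\Phi_2$, given as the graph of $$f(r_1)=\log_2\!\left(1+\frac{cP_{\max}}{1+\frac{d}{a}(1+bP_{\max})(2^{r_1}-1)}\right),\qquad r_1\ge 0 .$$ Let $P_1=\frac1a(1+bP_{\max})(2^{r_1}-1)$ be the corresponding power of user 1. Then $$\operatorname{sign}\big(f''(r_1)\big)=\operatorname{sign}\Big((\alpha+adP_1)^2-(a-\alpha)(a-\alpha+acP_{\max})\Big)=\operatorname{sign}(P_1-Q_1),$$ where the inflection threshold is $$Q_1=\frac{\Re\!\left(\sqrt{(a-\alpha)(a-\alpha+acP_{\max})}\right)-\alpha}{ad}.$$ In particular, $\Phi_2$ restricted to $P_1\in[0,P_{\max}]$ is concave if $Q_1\ge P_{\max}$ and convex if $Q_1\le 0$. If $0<Q_1<P_{\max}$, it is concave for $P_1\in[0,Q_1]$ and convex for $P_1\in[Q_1,P_{\max}]$.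
   Context: The channel power gains are normalized by the noise variance: $a$ (direct gain of user 1), $b$ (interference gain from transmitter 2 at receiver 1), $c$ (direct gain of user 2), $d$ (interference gain from transmitter 1 at receiver 2). The rates are $R_1(P_1,P_2)=\log_2\!\left(1+\frac{aP_1}{1+bP_2}\right)$ and $R_2(P_1,P_2)=\log_2\!\left(1+\frac{cP_2}{1+dP_1}\right)$. The curve $\Phi_2$ is the set of rate pairs obtained with $P_2=P_{\max}$ and $P_1$ ranging over $[0,P_{\max}]$. $\Re$ denotes the real part, and the square root of a negative number is purely imaginary. *)

(* Defs.v *)
From Stdlib Require Import Reals Lra.
Open Scope R_scope.

Definition log2 (x : R) : R := ln x / ln 2.

Definition sgn (x : R) : R :=
  if Rlt_dec 0 x then 1 else if Rlt_dec x 0 then -1 else 0.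

(* real part of the principal square root: sqrt x if x >= 0, 0 otherwise
   (the square root of a negative number is purely imaginary) *)
Definition re_sqrt (x : R) : R := if Rle_dec 0 x then sqrt x else 0.

Definition alpha (b d Pmax : R) : R := d * (1 + b * Pmax).

Definition frontier (a b c d Pmax : R) (r1 : R) : R :=
  log2 (1 + c * Pmax / (1 + d / a * (1 + b * Pmax) * (Rpower 2 r1 - 1))).

Definition P1_of (a b Pmax : R) (r1 : R) : R :=
  / a * (1 + b * Pmax) * (Rpower 2 r1 - 1).

Definition Q1 (a b c d Pmax : R) : R :=
  (re_sqrt ((a - alpha b d Pmax) * (a - alpha b d Pmax + a * c * Pmax))
     - alpha b d Pmax) / (a * d).

Definition concave_on (f : R -> R) (S : R -> Prop) : Prop :=
  forall x y t, S x -> S y -> 0 <= t <= 1 ->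
    t * f x + (1 - t) * f y <= f (t * x + (1 - t) * y).

Definition convex_on (f : R -> R) (S : R -> Prop) : Prop :=
  forall x y t, S x -> S y -> 0 <= t <= 1 ->
    f (t * x + (1 - t) * y) <= t * f x + (1 - t) * f y.

(* Main.v *)
From Stdlib Require Import Reals Lra Psatz.
From Coquelicot Require Import Coquelicot.
Require Import Defs.
Open Scope R_scope.

Lemma sgn_pos_mul k A : 0 < k -> sgn (k * A) = sgn A.
Proof.
  intro hk. unfold sgn.
  destruct (Rlt_dec 0 (k*A)); destruct (Rlt_dec 0 A); try reflexivity;
  destruct (Rlt_dec (k*A) 0); destruct (Rlt_dec A 0); try reflexivity; exfalso; nra.
Qed.

Lemma sgn_le0 A B : sgn A = sgn B -> B <= 0 -> A <= 0.
Proof.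
  unfold sgn; intros h hB.
  destruct (Rlt_dec 0 A); destruct (Rlt_dec 0 B); try lra;
  destruct (Rlt_dec B 0); destruct (Rlt_dec A 0); lra.
Qed.

Lemma sgn_ge0 A B : sgn A = sgn B -> 0 <= B -> 0 <= A.
Proof.
  unfold sgn; intros h hB.
  destruct (Rlt_dec 0 A); destruct (Rlt_dec 0 B); try lra;
  destruct (Rlt_dec B 0); destruct (Rlt_dec A 0); lra.
Qed.

Lemma sign_main X Y k : 0 < X -> 0 < k ->
  sgn (X ^ 2 - Y) = sgn ((X - re_sqrt Y) / k).
Proof.
  intros hX hk. unfold re_sqrt.
  destruct (Rle_dec 0 Y) as [hY|hY].
  - pose proof (sqrt_pos Y). pose proof (sqrt_sqrt Y hY).
    replace (X^2 - Y) with ((X + sqrt Y) * (X - sqrt Y)) by (rewrite <- H0 at 3; ring).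
    rewrite sgn_pos_mul by lra.
    replace ((X - sqrt Y) / k) with (/k * (X - sqrt Y)) by (field; lra).
    rewrite sgn_pos_mul; [reflexivity|]. apply Rinv_0_lt_compat; lra.
  - unfold sgn.
    assert (0 < X^2 - Y) by nra.
    assert (0 < (X - 0) / k) by (apply Rdiv_lt_0_compat; lra).
    destruct (Rlt_dec 0 (X^2 - Y)); destruct (Rlt_dec 0 ((X - 0) / k)); lra.
Qed.

Lemma concave_aux (f g : R -> R) (S : R -> Prop) x y t :
  (forall x y z, S x -> S y -> x <= z <= y -> S z) ->
  (forall x, S x -> derivable_pt_lim f x (g x)) ->
  (forall x y, S x -> S y -> x <= y -> g y <= g x) ->
  S x -> S y -> x < y -> 0 <= t <= 1 ->
  t * f x + (1 - t) * f y <= f (t * x + (1 - t) * y).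
Proof.
  intros hI hd hm Sx Sy hxy ht.
  destruct (Req_dec t 0) as [h0|h0].
  { subst t. replace (0 * x + (1 - 0) * y) with y by ring. lra. }
  destruct (Req_dec t 1) as [h1|h1].
  { subst t. replace (1 * x + (1 - 1) * y) with x by ring. lra. }
  set (z := t * x + (1 - t) * y).
  assert (hz1 : x < z) by (unfold z; nra).
  assert (hz2 : z < y) by (unfold z; nra).
  destruct (MVT_cor2 f g x z hz1) as [c1 [E1 hc1]].
  { intros c hc. apply hd. apply (hI x y); [assumption|assumption|lra]. }
  destruct (MVT_cor2 f g z y hz2) as [c2 [E2 hc2]].
  { intros c hc. apply hd. apply (hI x y); [assumption|assumption|lra]. }
  assert (Sc1 : S c1) by (apply (hI x y); [assumption|assumption|lra]).
  assert (Sc2 : S c2) by (apply (hI x y); [assumption|assumption|lra]).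
  assert (hg : g c2 <= g c1) by (apply hm; auto; lra).
  assert (hp : 0 <= t * (1 - t) * (y - x) * (g c1 - g c2)).
  { repeat apply Rmult_le_pos; lra. }
  assert (hfx : f x = f z - g c1 * (z - x)) by lra.
  assert (hfy : f y = f z + g c2 * (y - z)) by lra.
  rewrite hfx, hfy.
  assert (t * (f z - g c1 * (z - x)) + (1 - t) * (f z + g c2 * (y - z)) - f z
          = - (t * (1 - t) * (y - x) * (g c1 - g c2))) by (unfold z; ring).
  lra.
Qed.

Lemma concave_deriv (f g : R -> R) (S : R -> Prop) :
  (forall x y z, S x -> S y -> x <= z <= y -> S z) ->
  (forall x, S x -> derivable_pt_lim f x (g x)) ->
  (forall x y, S x -> S y -> x <= y -> g y <= g x) ->
  concave_on f S.
Proof.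
  intros hI hd hm x y t Sx Sy ht.
  destruct (Rtotal_order x y) as [lt|[eq|gt]].
  - eapply concave_aux; eauto.
  - subst y. replace (t * x + (1 - t) * x) with x by ring. lra.
  - pose proof (concave_aux f g S y x (1 - t) hI hd hm Sy Sx gt ltac:(lra)) as H.
    replace (t * x + (1 - t) * y) with ((1 - t) * y + (1 - (1 - t)) * x) by ring.
    lra.
Qed.

Lemma convex_deriv (f g : R -> R) (S : R -> Prop) :
  (forall x y z, S x -> S y -> x <= z <= y -> S z) ->
  (forall x, S x -> derivable_pt_lim f x (g x)) ->
  (forall x y, S x -> S y -> x <= y -> g x <= g y) ->
  convex_on f S.
Proof.
  intros hI hd hm.
  assert (H : concave_on (fun x => - f x) S).
  { apply (concave_deriv _ (fun x => - g x)); auto.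
    - intros x Sx. apply (derivable_pt_lim_opp f x (g x)). auto.
    - intros x y Sx Sy hxy. specialize (hm x y Sx Sy hxy). lra. }
  intros x y t Sx Sy ht. specialize (H x y t Sx Sy ht). simpl in H. lra.
Qed.

Lemma f1_cmp m C ux uy : 0 < m -> 0 < C -> 0 < ux -> ux <= uy ->
  0 < 1 + m * (ux - 1) -> 0 < 1 + m * (uy - 1) ->
  (m ^ 2 * ux * uy <= (1 - m) * (1 - m + C) ->
   - C * m * uy / ((1 + m * (uy - 1)) * ((1 + m * (uy - 1)) + C)) <=
   - C * m * ux / ((1 + m * (ux - 1)) * ((1 + m * (ux - 1)) + C))) /\
  ((1 - m) * (1 - m + C) <= m ^ 2 * ux * uy ->
   - C * m * ux / ((1 + m * (ux - 1)) * ((1 + m * (ux - 1)) + C)) <=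
   - C * m * uy / ((1 + m * (uy - 1)) * ((1 + m * (uy - 1)) + C))).
Proof.
  intros hm hC hux hxy hDx hDy.
  remember (1 + m * (ux - 1)) as Dx eqn:eDx. remember (1 + m * (uy - 1)) as Dy eqn:eDy.
  assert (hPx : 0 < Dx * (Dx + C)) by (apply Rmult_lt_0_compat; lra).
  assert (hPy : 0 < Dy * (Dy + C)) by (apply Rmult_lt_0_compat; lra).
  assert (key : - C * m * ux / (Dx * (Dx + C)) - - C * m * uy / (Dy * (Dy + C))
     = C * m * ((uy - ux) * ((1 - m) * (1 - m + C) - m ^ 2 * ux * uy)) /
       ((Dx * (Dx + C)) * (Dy * (Dy + C)))).
  { subst Dx Dy. field. split; lra. }
  assert (hPP : 0 < (Dx * (Dx + C)) * (Dy * (Dy + C))) by (apply Rmult_lt_0_compat; lra).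
  split; intro h.
  - assert (0 <= C * m * ((uy - ux) * ((1 - m) * (1 - m + C) - m ^ 2 * ux * uy)) /
       ((Dx * (Dx + C)) * (Dy * (Dy + C)))).
    { unfold Rdiv. apply Rmult_le_pos; [|left; apply Rinv_0_lt_compat; lra].
      apply Rmult_le_pos; [nra|]. apply Rmult_le_pos; lra. }
    lra.
  - assert (0 <= C * m * ((uy - ux) * (m ^ 2 * ux * uy - (1 - m) * (1 - m + C))) /
       ((Dx * (Dx + C)) * (Dy * (Dy + C)))).
    { unfold Rdiv. apply Rmult_le_pos; [|left; apply Rinv_0_lt_compat; lra].
      apply Rmult_le_pos; [nra|]. apply Rmult_le_pos; lra. }
    assert (C * m * ((uy - ux) * (m ^ 2 * ux * uy - (1 - m) * (1 - m + C))) /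
       ((Dx * (Dx + C)) * (Dy * (Dy + C))) = - (C * m * ((uy - ux) * ((1 - m) * (1 - m + C) - m ^ 2 * ux * uy)) /
       ((Dx * (Dx + C)) * (Dy * (Dy + C))))) by (field; lra).
    lra.
Qed.
Lemma der_f (m C x : R) (hm : 0 < m) (hC : 0 < C) (hD : 0 < 1 + m * (exp (x * ln 2) - 1)) :
  is_derive (fun x => ln (1 + C / (1 + m * (exp (x * ln 2) - 1))) / ln 2) x
   (- C * m * exp (x * ln 2) / ((1 + m * (exp (x * ln 2) - 1)) * ((1 + m * (exp (x * ln 2) - 1)) + C))).
Proof.
  assert (hl : 0 < ln 2) by (rewrite <- ln_1; apply ln_increasing; lra).
  auto_derive.
  - repeat split; try lra.
    apply Rplus_lt_0_compat; [lra|]. apply Rdiv_lt_0_compat; lra.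
  - field. repeat split; lra.
Qed.

Lemma der_f1 (m C x : R) (hm : 0 < m) (hC : 0 < C) (hD : 0 < 1 + m * (exp (x * ln 2) - 1)) :
  is_derive (fun x => - C * m * exp (x * ln 2) / ((1 + m * (exp (x * ln 2) - 1)) * ((1 + m * (exp (x * ln 2) - 1)) + C))) x
   (C * m * exp (x * ln 2) * ln 2 * (m^2 * (exp (x * ln 2))^2 - (1 - m) * (1 - m + C)) /
     ((1 + m * (exp (x * ln 2) - 1)) * ((1 + m * (exp (x * ln 2) - 1)) + C))^2).
Proof.
  auto_derive.
  - apply Rmult_integral_contrapositive_currified; lra.
  - field. split; lra.
Qed.

Theorem mainTheorem6 (a b c d Pmax : R)
  (ha : 0 < a) (hb : 0 < b) (hc : 0 < c) (hd : 0 < d) (hP : 0 < Pmax) :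
  let f := frontier a b c d Pmax in
  let al := alpha b d Pmax in
  let P1 := P1_of a b Pmax in
  let q := Q1 a b c d Pmax in
  (forall r1 : R, 0 <= r1 ->
     exists (eps : R) (f1 : R -> R) (f2 : R),
       0 < eps /\
       (forall x, Rabs (x - r1) < eps -> derivable_pt_lim f x (f1 x)) /\
       derivable_pt_lim f1 r1 f2 /\
       sgn f2 = sgn ((al + a * d * P1 r1) ^ 2
                     - (a - al) * (a - al + a * c * Pmax)) /\
       sgn ((al + a * d * P1 r1) ^ 2 - (a - al) * (a - al + a * c * Pmax))
         = sgn (P1 r1 - q)) /\
  (Pmax <= q -> concave_on f (fun r => 0 <= r /\ P1 r <= Pmax)) /\
  (q <= 0 -> convex_on f (fun r => 0 <= r /\ P1 r <= Pmax)) /\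
  (0 < q < Pmax ->
     concave_on f (fun r => 0 <= r /\ P1 r <= q) /\
     convex_on f (fun r => 0 <= r /\ q <= P1 r /\ P1 r <= Pmax)).
Proof.
  intros f al P1 q.
  assert (hl : 0 < ln 2) by (rewrite <- ln_1; apply ln_increasing; lra).
  pose (m := d / a * (1 + b * Pmax)).
  pose (C := c * Pmax).
  pose (E := (1 - m) * (1 - m + C)).
  pose (U := fun r => exp (r * ln 2)).
  assert (hm : 0 < m).
  { unfold m. apply Rmult_lt_0_compat; [apply Rdiv_lt_0_compat; lra | nra]. }
  assert (hC : 0 < C) by (unfold C; nra).
  assert (hUpos : forall r, 0 < U r) by (intro; unfold U; apply exp_pos).
  assert (hU1 : forall r, 0 <= r -> 1 <= U r).
  { intros r hr. unfold U. pose proof (exp_ineq1_le (r * ln 2)). nra. }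
  assert (hUmono : forall x y, x <= y -> U x <= U y).
  { intros x y hxy. unfold U. destruct (Rle_lt_or_eq_dec x y hxy) as [h|h].
    - left. apply exp_increasing. nra.
    - subst; lra. }
  assert (hP1 : forall r, P1 r = / a * (1 + b * Pmax) * (U r - 1)) by reflexivity.
  assert (hX : forall r, al + a * d * P1 r = a * m * U r).
  { intro r. rewrite hP1. unfold al, alpha, m. field. lra. }
  assert (hY : (a - al) * (a - al + a * c * Pmax) = a ^ 2 * E).
  { unfold E, m, C, al, alpha. field. lra. }
  assert (hT : forall r, (al + a * d * P1 r) ^ 2 - (a - al) * (a - al + a * c * Pmax)
                         = a ^ 2 * (m ^ 2 * U r ^ 2 - E)).
  { intro r. rewrite hX, hY. ring. }
  assert (hsign : forall r, sgn ((al + a * d * P1 r) ^ 2 - (a - al) * (a - al + a * c * Pmax))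
                            = sgn (P1 r - q)).
  { intro r.
    replace (P1 r - q) with ((al + a * d * P1 r - re_sqrt ((a - al) * (a - al + a * c * Pmax))) / (a * d)).
    - rewrite hX. apply sign_main.
      + pose proof (hUpos r). apply Rmult_lt_0_compat; [|lra]. nra.
      + nra.
    - unfold q, Q1, al. field. lra. }
  assert (hD : forall r, 0 <= r -> 1 <= 1 + m * (U r - 1)).
  { intros r hr. pose proof (hU1 r hr). nra. }
  pose (f1 := fun x => - C * m * exp (x * ln 2) /
       ((1 + m * (exp (x * ln 2) - 1)) * ((1 + m * (exp (x * ln 2) - 1)) + C))).
  assert (hderiv : forall x, 0 < 1 + m * (U x - 1) -> derivable_pt_lim f x (f1 x)).
  { intros x hx. apply is_derive_Reals. unfold f, frontier, log2, Rpower, f1.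
    exact (der_f m C x hm hC hx). }
  assert (hmono : forall x y, 0 <= x -> x <= y ->
     (m ^ 2 * U x * U y <= E -> f1 y <= f1 x) /\ (E <= m ^ 2 * U x * U y -> f1 x <= f1 y)).
  { intros x y hx hxy.
    pose proof (hD x hx). pose proof (hD y ltac:(lra)).
    exact (f1_cmp m C (U x) (U y) hm hC (hUpos x) (hUmono x y hxy) ltac:(lra) ltac:(lra)). }
  assert (hP1mono : forall x y, x <= y -> P1 x <= P1 y).
  { intros x y hxy. rewrite !hP1. pose proof (hUmono x y hxy).
    assert (0 < / a * (1 + b * Pmax)) by (apply Rmult_lt_0_compat; [apply Rinv_0_lt_compat; lra| nra]).
    nra. }
  assert (hP1pos : forall r, 0 <= r -> 0 <= P1 r).
  { intros r hr. rewrite hP1. pose proof (hU1 r hr).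
    assert (0 < / a * (1 + b * Pmax)) by (apply Rmult_lt_0_compat; [apply Rinv_0_lt_compat; lra| nra]).
    nra. }
  assert (hneg : forall r, P1 r <= q -> m ^ 2 * U r ^ 2 <= E).
  { intros r h. pose proof (sgn_le0 _ _ (hsign r) ltac:(lra)) as H. rewrite hT in H.
    assert (0 < a ^ 2) by nra. nra. }
  assert (hposi : forall r, q <= P1 r -> E <= m ^ 2 * U r ^ 2).
  { intros r h. pose proof (sgn_ge0 _ _ (hsign r) ltac:(lra)) as H. rewrite hT in H.
    assert (0 < a ^ 2) by nra. nra. }
  assert (hcave : forall S : R -> Prop,
     (forall x y z, S x -> S y -> x <= z <= y -> S z) ->
     (forall x, S x -> 0 <= x /\ P1 x <= q) -> concave_on f S).
  { intros S hI hS. apply (concave_deriv f f1 S hI).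
    - intros x Sx. apply hderiv. destruct (hS x Sx). pose proof (hD x H). lra.
    - intros x y Sx Sy hxy. destruct (hS x Sx) as [hx _]. destruct (hS y Sy) as [_ hy].
      apply (proj1 (hmono x y hx hxy)).
      pose proof (hneg y hy). pose proof (hUmono x y hxy). pose proof (hUpos x).
      pose proof (hUpos y). assert (U x * U y <= U y ^ 2) by nra.
      assert (0 < m ^ 2) by nra. nra. }
  assert (hvex : forall S : R -> Prop,
     (forall x y z, S x -> S y -> x <= z <= y -> S z) ->
     (forall x, S x -> 0 <= x /\ q <= P1 x) -> convex_on f S).
  { intros S hI hS. apply (convex_deriv f f1 S hI).
    - intros x Sx. apply hderiv. destruct (hS x Sx). pose proof (hD x H). lra.
    - intros x y Sx Sy hxy. destruct (hS x Sx) as [hx hqx].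
      apply (proj2 (hmono x y hx hxy)).
      pose proof (hposi x hqx). pose proof (hUmono x y hxy). pose proof (hUpos x).
      pose proof (hUpos y). assert (U x ^ 2 <= U x * U y) by nra.
      assert (0 < m ^ 2) by nra. nra. }
  split; [|split; [|split]].
  - intros r1 hr1.
    pose (D0 := 1 + m * (exp (r1 * ln 2) - 1)).
    exists (1 / (m * ln 2)), f1,
      (C * m * exp (r1 * ln 2) * ln 2 * (m^2 * (exp (r1 * ln 2))^2 - (1 - m) * (1 - m + C)) /
     ((1 + m * (exp (r1 * ln 2) - 1)) * ((1 + m * (exp (r1 * ln 2) - 1)) + C))^2).
    assert (hD0 : 1 <= D0) by exact (hD r1 hr1).
    split; [|split; [|split; [|split]]].
    + apply Rdiv_lt_0_compat; [lra | nra].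
    + intros x hx. apply hderiv.
      assert (heps : m * ln 2 * (1 / (m * ln 2)) = 1) by (field; lra).
      assert (hxe : - (1 / (m * ln 2)) < x).
      { pose proof (Rle_abs (-(x - r1))). rewrite Rabs_Ropp in H. lra. }
      assert (m * ln 2 * x > -1).
      { assert (0 < m * ln 2) by nra. nra. }
      pose proof (exp_ineq1_le (x * ln 2)). unfold U. nra.
    + apply is_derive_Reals. exact (der_f1 m C r1 hm hC ltac:(unfold D0 in hD0; lra)).
    + rewrite hT.
      replace (C * m * exp (r1 * ln 2) * ln 2 * (m^2 * (exp (r1 * ln 2))^2 - (1 - m) * (1 - m + C)) /
         ((1 + m * (exp (r1 * ln 2) - 1)) * ((1 + m * (exp (r1 * ln 2) - 1)) + C))^2)
        with ((C * m * U r1 * ln 2 / (a ^ 2 * (D0 * (D0 + C)) ^ 2)) * (a ^ 2 * (m ^ 2 * U r1 ^ 2 - E))).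
      * apply sgn_pos_mul. pose proof (hUpos r1).
        assert (hn : 0 < C * m * U r1 * ln 2).
        { apply Rmult_lt_0_compat; [apply Rmult_lt_0_compat; [apply Rmult_lt_0_compat; assumption| assumption] | assumption]. }
        assert (hq1 : 0 < D0 * (D0 + C)).
        { apply Rmult_lt_0_compat. lra. apply Rplus_lt_0_compat; lra. }
        assert (hd2 : 0 < a ^ 2 * (D0 * (D0 + C)) ^ 2).
        { apply Rmult_lt_0_compat; apply pow_lt; assumption. }
        apply Rdiv_lt_0_compat; assumption.
      * unfold D0, E, U. field. unfold D0 in hD0. repeat split; lra.
    + apply hsign.
  - intro hq. apply hcave.
    + intros x y z [hx hx'] [hy hy'] hz. split; [lra|].
      pose proof (hP1mono z y (proj2 hz)). lra.
    + intros x [hx hx']. split; lra.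
  - intro hq. apply hvex.
    + intros x y z [hx hx'] [hy hy'] hz. split; [lra|].
      pose proof (hP1mono z y (proj2 hz)). lra.
    + intros x [hx hx']. pose proof (hP1pos x hx). split; lra.
  - intro hq. split.
    + apply hcave.
      * intros x y z [hx hx'] [hy hy'] hz. split; [lra|].
        pose proof (hP1mono z y (proj2 hz)). lra.
      * intros x [hx hx']. split; lra.
    + apply hvex.
      * intros x y z [hx hx'] [hy hy'] hz. split; [lra|].
        pose proof (hP1mono z y (proj2 hz)). pose proof (hP1mono x z (proj1 hz)). lra.
      * intros x [hx hx']. split; lra.
Qed.
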